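(* Let $N\ge 3$ and $0\le t\le \frac1N$, and let $|\psi_{\vec t}\rangle=\sqrt{1-Nt}\,|00\cdots0\rangle+\sqrt t\,(|10\cdots0\rangle+|01\cdots0\rangle+\cdots+|00\cdots1\rangle)$ be an $N$-qubit state. The optimal LOCC success probability for randomly distilling $|\psi_{\vec t}\rangle$ into an EPR pair shared between party 1 and some other party $j\in\{2,\dots,N\}$ (all remaining parties in a product state) is at most $$1-\sqrt{1-4(N-1)t^2}.$$
   Context: An EPR pair between parties $i,j$ is a state local-unitarily equivalent to $\frac1{\sqrt2}(|00\rangle+|11\rangle)_{ij}$. The optimal success probability is the supremum over LOCC (local operations and classical communication) protocols acting on a single copy of the state of the total probability that, for some $j\in\{2,\dots,N\}$, the final state is an EPR pair between parties $1$ and $j$ with all other parties in a product state. *)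

(* Defs.v *)
From HB Require Import structures.
From mathcomp Require Import all_boot all_order all_algebra.
From Stdlib Require Import ClassicalEpsilon.
Set Implicit Arguments. Unset Strict Implicit. Unset Printing Implicit Defensive.
Import Order.TTheory GRing.Theory Num.Theory.
Local Open Scope ring_scope.

Definition pdec (P : Prop) : bool :=
  if excluded_middle_informative P then true else false.

Section QState.
Variables (C : numClosedFieldType) (N D : nat).

(* computational basis of N parties, each with local dimension D *)
Definition basis := {ffun 'I_N -> 'I_D}.

(* (unnormalized) pure state: amplitude function on the basis *)
Definition state := basis -> C.

Definition upd (x : basis) (k : 'I_N) (a : 'I_D) : basis :=
  [ffun i => if i == k then a else x i].

(* apply the local operator M (a D x D matrix) to party k *)
Definition applyL (k : 'I_N) (M : 'M[C]_D) (psi : state) : state :=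
  fun x => \sum_(a : 'I_D) M (x k) a * psi (upd x k a).

Definition nrm2 (psi : state) : C := \sum_(x : basis) psi x * (psi x)^*.

Definition adj (M : 'M[C]_D) : 'M[C]_D := (map_mx Num.conj M)^T.

Definition orthonormal2 (u0 u1 : 'I_D -> C) : Prop :=
  \sum_a u0 a * (u0 a)^* = 1 /\ \sum_a u1 a * (u1 a)^* = 1 /\
  \sum_a u0 a * (u1 a)^* = 0.

(* phi is (proportional to) an EPR pair between party 1 (index ord 0) and
   party j <> 1, up to local unitaries/isometries, tensored with a product
   state on all other parties. *)
Definition EPR_leaf (phi : state) : Prop :=
  exists (j : 'I_N) (u0 u1 v0 v1 : 'I_D -> C) (w : 'I_N -> 'I_D -> C) (c : C),
    (nat_of_ord j != 0%N) /\ orthonormal2 u0 u1 /\ orthonormal2 v0 v1 /\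
    forall x : basis,
      phi x = c * (\sum_(i0 : 'I_N | nat_of_ord i0 == 0%N)
                     (u0 (x i0) * v0 (x j) + u1 (x i0) * v1 (x j)))
                * \prod_(k : 'I_N | (nat_of_ord k != 0%N) && (k != j)) w k (x k).

End QState.

(* Finite-round LOCC protocol (tree): at each node a party k performs a
   measurement with Kraus operators K i (i < m), the outcome is broadcast and
   the protocol continues with nx i. *)
Inductive locc (C : numClosedFieldType) (N D : nat) : Type :=
| Stop : locc C N D
| Meas : 'I_N -> forall m : nat, ('I_m -> 'M[C]_D) -> ('I_m -> locc C N D) -> locc C N D.

Arguments Stop {C N D}.

Fixpoint valid_locc (C : numClosedFieldType) (N D : nat) (p : locc C N D) : Prop :=
  match p with
  | Stop => True
  | Meas k m K nx =>
      (\sum_(i < m) adj (K i) *m K i = 1%:M) /\ forall i, valid_locc (nx i)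
  end.

Fixpoint succ_prob (C : numClosedFieldType) (N D : nat) (p : locc C N D)
    (psi : state C N D) : C :=
  match p with
  | Stop => if pdec (EPR_leaf psi) then nrm2 psi else 0
  | Meas k m K nx => \sum_(i < m) succ_prob (nx i) (applyL k (K i) psi)
  end.

(* |psi_t> embedded in local dimension D >= 2 (levels 0,1 = qubit) *)
Definition psi_t (C : numClosedFieldType) (N D : nat) (t : C) : state C N D :=
  fun x => if [forall k, (nat_of_ord (x k) <= 1)%N] then
             (if (\sum_k nat_of_ord (x k) == 0)%N then sqrtC (1 - N%:R * t)
              else if (\sum_k nat_of_ord (x k) == 1)%N then sqrtC t else 0)
           else 0.

(* Main.v *)
Require Import Defs.
From HB Require Import structures.
From mathcomp Require Import all_boot all_order all_algebra.
From mathcomp Require Import ring zify.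
From Stdlib Require Import ClassicalEpsilon.
Set Implicit Arguments. Unset Strict Implicit. Unset Printing Implicit Defensive.
Import Order.TTheory GRing.Theory Num.Theory.
Local Open Scope ring_scope.

Section Upd.
Lemma updE N D (x : basis N D) k a i : upd x k a i = if i == k then a else x i.
Proof. by rewrite /upd ffunE. Qed.
Lemma upd_at N D (x : basis N D) k a : upd x k a k = a.
Proof. by rewrite updE eqxx. Qed.
Lemma upd_ne N D (x : basis N D) k a i : i != k -> upd x k a i = x i.
Proof. by rewrite updE => /negbTE ->. Qed.
Lemma upd_id N D (x : basis N D) k : upd x k (x k) = x.
Proof. by apply/ffunP=> i; rewrite updE; case: eqP => // ->. Qed.
Lemma upd_upd N D (x : basis N D) k a b : upd (upd x k a) k b = upd x k b.
Proof. by apply/ffunP=> i; rewrite !updE; case: eqP. Qed.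
Lemma upd_comm N D (x : basis N D) k l a b : k != l ->
  upd (upd x k a) l b = upd (upd x l b) k a.
Proof.
move=> kl; apply/ffunP=> i; rewrite !updE.
case: (eqVneq i l) => [il|il]; case: (eqVneq i k) => [ik|ik] //.
by move: kl; rewrite -ik -il eqxx.
Qed.
End Upd.

Definition swp N D (k : 'I_N) (d0 d : 'I_D) (x : basis N D) : basis N D :=
  upd x k (if x k == d0 then d else if x k == d then d0 else x k).

Lemma swp_val D (d0 d v : 'I_D) :
  (let w := if v == d0 then d else if v == d then d0 else v in
   if w == d0 then d else if w == d then d0 else w) = v.
Proof.
rewrite /=.
case: (eqVneq v d0) => [->|n0].
  by rewrite eqxx; case: eqP.
case: (eqVneq v d) => [->|n1].
  by rewrite eqxx.
by rewrite (negbTE n0) (negbTE n1).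
Qed.

Lemma swpK N D k (d0 d : 'I_D) : involutive (@swp N D k d0 d).
Proof.
move=> x; rewrite /swp upd_at upd_upd.
have := swp_val d0 d (x k); rewrite /= => ->.
by rewrite upd_id.
Qed.

Lemma sw_eq D (d0 d v : 'I_D) :
  ((if v == d0 then d else if v == d then d0 else v) == d) = (v == d0).
Proof.
case: (eqVneq v d0) => [_|n0]; first by rewrite !eqxx.
case: (eqVneq v d) => [e|n1].
  by apply/eqP => E; move: n0; rewrite e E eqxx.
by rewrite (negbTE n1).
Qed.

Lemma sliceR (C : numClosedFieldType) N D (k : 'I_N) (d0 d : 'I_D)
  (G : basis N D -> C) :
  \sum_(x : basis N D | x k == d) G x = \sum_(x : basis N D | x k == d0) G (upd x k d).
Proof.
rewrite (reindex_inj (can_inj (swpK k d0 d))).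
apply: eq_big => x.
  by rewrite /swp upd_at sw_eq.
move=> H; have e : x k == d0 by rewrite -(sw_eq d0 d); move: H; rewrite /swp upd_at.
by rewrite /swp (eqP e) eqxx.
Qed.

Lemma splitS (C : numClosedFieldType) N D (k : 'I_N) (d0 : 'I_D)
  (G : basis N D -> C) :
  \sum_(x : basis N D) G x = \sum_(x : basis N D | x k == d0) \sum_d G (upd x k d).
Proof.
rewrite (partition_big (fun x : basis N D => x k) predT) //=.
rewrite exchange_big /=; apply: eq_bigr => d _.
by rewrite -sliceR; apply: eq_bigl => x.
Qed.
Definition ipg (C : numClosedFieldType) (I : finType) (f g : I -> C) : C :=
  \sum_i (f i)^* * g i.
Definition sq (C : numClosedFieldType) (z : C) : C := z * z^*.

Lemma sq_ge0 (C : numClosedFieldType) (z : C) : 0 <= sq z.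
Proof. exact: mul_conjC_ge0. Qed.

Lemma ipg_ge0 (C : numClosedFieldType) (I : finType) (f : I -> C) : 0 <= ipg f f.
Proof. by apply: sumr_ge0 => i _; rewrite mulrC mul_conjC_ge0. Qed.

Lemma ipg_conj (C : numClosedFieldType) (I : finType) (f g : I -> C) :
  (ipg f g)^* = ipg g f.
Proof.
rewrite /ipg rmorph_sum; apply: eq_bigr => i _.
by rewrite rmorphM /= conjCK mulrC.
Qed.

Lemma CS (C : numClosedFieldType) (I : finType) (f g : I -> C) :
  sq (ipg f g) <= ipg f f * ipg g g.
Proof.
set A := ipg f f; set B := ipg g g; set z := ipg f g.
have A0 : 0 <= A by exact: ipg_ge0.
have AC : A^* = A by exact: geC0_conj.
have E : \sum_i (A * g i - z * f i) * (A * g i - z * f i)^* = A * (A * B - sq z).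
  rewrite (eq_bigr (fun i => A*A*((g i)^* * g i) - A*z^**((f i)^* * g i)
           - A*z*((f i)^* * g i)^* + z*z^**((f i)^* * f i))); last first.
    by move=> i _; rewrite !rmorphB !rmorphM /= !conjCK AC; ring.
  rewrite big_split /= !sumrB -!mulr_sumr -rmorph_sum.
  rewrite -/(ipg g g) -/(ipg f g) -/(ipg f f) -/A -/B -/z /sq; ring.
have S0 : 0 <= A * (A * B - sq z).
  by rewrite -E; apply: sumr_ge0 => i _; exact: mul_conjC_ge0.
case: (eqVneq A 0) => [A00|An0].
  have H0 : forall j, true -> 0 <= (f j)^* * f j.
    by move=> j _; rewrite mulrC mul_conjC_ge0.
  have f0 : forall i, f i = 0.
    move=> i; have := @psumr_eq0P _ _ _ _ H0 A00 i isT.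
    by move=> /eqP; rewrite mulf_eq0 conjC_eq0 orbb => /eqP.
  have z0 : z = 0 by rewrite /z /ipg big1 // => i _; rewrite f0 rmorph0 mul0r.
  by rewrite A00 mul0r /sq z0 mul0r.
have Ap : 0 < A by rewrite lt_def An0 A0.
by rewrite -subr_ge0; move: S0; rewrite pmulr_rge0.
Qed.
Lemma step1 (C : numClosedFieldType) N D (k : 'I_N) (d0 : 'I_D) (M : 'M[C]_D)
  (P Q : state C N D) :
  ipg (applyL k M P) (applyL k M Q) =
  \sum_(x : basis N D | x k == d0) \sum_a \sum_c
     ((\sum_d (M d a)^* * M d c) * ((P (upd x k a))^* * Q (upd x k c))).
Proof.
rewrite /ipg (splitS k d0); apply: eq_bigr => x _.
transitivity (\sum_d \sum_a \sum_c
   ((M d a)^* * M d c * ((P (upd x k a))^* * Q (upd x k c)))).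
  apply: eq_bigr => d _; rewrite /applyL upd_at rmorph_sum mulr_suml.
  apply: eq_bigr => a _; rewrite mulr_sumr; apply: eq_bigr => c _.
  by rewrite !upd_upd rmorphM /=; ring.
rewrite exchange_big; apply: eq_bigr => a _; rewrite exchange_big.
by apply: eq_bigr => c _; rewrite mulr_suml.
Qed.

Lemma kraus_entry (C : numClosedFieldType) D m (K : 'I_m -> 'M[C]_D)
  (hK : \sum_(i < m) adj (K i) *m K i = 1%:M) (a c : 'I_D) :
  \sum_i \sum_d (K i d a)^* * K i d c = (a == c)%:R.
Proof.
have := congr1 (fun M : 'M[C]_D => M a c) hK; rewrite /= summxE mxE => <-.
apply: eq_bigr => i _; rewrite mxE; apply: eq_bigr => d _.
by rewrite /adj !mxE.
Qed.

Lemma kraus (C : numClosedFieldType) N D (k : 'I_N) (d0 : 'I_D) m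
  (K : 'I_m -> 'M[C]_D) (hK : \sum_(i < m) adj (K i) *m K i = 1%:M)
  (P Q : state C N D) :
  \sum_i ipg (applyL k (K i) P) (applyL k (K i) Q) = ipg P Q.
Proof.
under eq_bigr do rewrite (step1 _ d0).
rewrite exchange_big /= [RHS](splitS k d0); apply: eq_bigr => x _.
rewrite exchange_big; apply: eq_bigr => a _; rewrite exchange_big /=.
rewrite (bigD1 a) //= [X in _ + X]big1 ?addr0.
  by rewrite -mulr_suml (kraus_entry hK) eqxx mul1r.
move=> c ca; rewrite -mulr_suml (kraus_entry hK).
by rewrite eq_sym (negbTE ca) mul0r.
Qed.
Definition isplit (C : numClosedFieldType) N D (z : 'I_N) (F : state C N D) : Prop :=
  exists (a : 'I_D -> C) (b : basis N D -> C),
    (forall x c, b (upd x z c) = b x) /\ forall x, F x = a (x z) * b x.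

Lemma isplit_applyL (C : numClosedFieldType) N D (z k : 'I_N) (M : 'M[C]_D)
  (F : state C N D) : isplit z F -> isplit z (applyL k M F).
Proof.
move=> [a [b [hb hF]]].
case: (eqVneq k z) => [->|kz].
  exists (fun d => \sum_c M d c * a c), b; split => // x.
  rewrite /applyL mulr_suml; apply: eq_bigr => c _.
  by rewrite hF upd_at hb mulrA.
exists a, (fun x : basis N D => \sum_c M (x k) c * b (upd x k c)); split.
  move=> x e; rewrite upd_ne //; apply: eq_bigr => c _.
  by rewrite upd_comm 1?eq_sym // hb.
move=> x; rewrite /applyL mulr_sumr; apply: eq_bigr => c _.
by rewrite hF upd_ne 1?eq_sym //; ring.
Qed.

Lemma isplit_scale (C : numClosedFieldType) N D (z : 'I_N) (r : C)
  (F : state C N D) : isplit z F -> isplit z (fun x => r * F x).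
Proof.
move=> [a [b [hb hF]]]; exists (fun d => r * a d), b; split => // x.
by rewrite hF mulrA.
Qed.
Lemma sq0 (C : numClosedFieldType) (z : C) : sq z = 0 -> z = 0.
Proof. by move/eqP; rewrite /sq mulf_eq0 conjC_eq0 orbb => /eqP. Qed.

Lemma wcs (C : numClosedFieldType) (I : finType) (n y zz : I -> C) :
  (forall i, 0 <= n i) -> (forall i, 0 <= y i) ->
  (forall i, sq (zz i) = n i * y i) ->
  sq (\sum_i zz i) <= (\sum_i n i) * (\sum_i y i).
Proof.
move=> n0 y0 hz.
pose f i := sqrtC (n i).
pose g i := if n i == 0 then 0 else zz i / sqrtC (n i).
have fc i : (f i)^* = f i by apply: geC0_conj; rewrite sqrtC_ge0.
have e1 : ipg f g = \sum_i zz i.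
  apply: eq_bigr => i _; rewrite fc /g /f.
  case: (eqVneq (n i) 0) => [e|ne].
    by rewrite mulr0; apply/esym/sq0; rewrite hz e mul0r.
  by rewrite mulrC -mulrA mulVf ?mulr1 // sqrtC_eq0.
have e2 : ipg f f = \sum_i n i.
  by apply: eq_bigr => i _; rewrite fc -expr2 sqrtCK.
have e3 : ipg g g <= \sum_i y i.
  apply: ler_sum => i _; rewrite /g.
  case: (eqVneq (n i) 0) => [e|ne]; first by rewrite mulr0.
  have sc : (sqrtC (n i))^* = sqrtC (n i) by apply: geC0_conj; rewrite sqrtC_ge0.
  have sn : sqrtC (n i) != 0 by rewrite sqrtC_eq0.
  rewrite rmorphM /= fmorphV /= sc.
  have -> : (zz i)^* / sqrtC (n i) * (zz i / sqrtC (n i)) =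
            sq (zz i) / (sqrtC (n i) ^+ 2).
    by rewrite /sq expr2 invfM; ring.
  by rewrite sqrtCK hz mulrC mulrA mulVf ?mul1r.
have := CS f g; rewrite e1 e2 => h; apply: (le_trans h).
apply: ler_wpM2l => //; exact: sumr_ge0.
Qed.
Lemma conj_sum_prod (C : numClosedFieldType) D (f g : 'I_D -> C) :
  (\sum_d f d * (g d)^*)^* = \sum_d g d * (f d)^*.
Proof. rewrite rmorph_sum; apply: eq_bigr => d _; by rewrite rmorphM /= conjCK mulrC. Qed.

Lemma onb_sum (C : numClosedFieldType) D (v0 v1 : 'I_D -> C) (x0 x1 : C) :
  orthonormal2 v0 v1 -> \sum_e sq (x0 * v0 e + x1 * v1 e) = sq x0 + sq x1.
Proof.
case=> [h0 [h1 h01]].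
have h10 : \sum_e v1 e * (v0 e)^* = 0 by rewrite -conj_sum_prod h01 rmorph0.
rewrite (eq_bigr (fun e => sq x0 * (v0 e * (v0 e)^*) + x0 * x1^* * (v0 e * (v1 e)^*)
   + x1 * x0^* * (v1 e * (v0 e)^*) + sq x1 * (v1 e * (v1 e)^*))); last first.
  by move=> e _; rewrite /sq !rmorphD !rmorphM /=; ring.
by rewrite !big_split /= -!mulr_sumr h0 h1 h01 h10; ring.
Qed.

Lemma bessel (C : numClosedFieldType) D (u0 u1 a : 'I_D -> C) :
  orthonormal2 u0 u1 ->
  sq (\sum_d (a d)^* * u0 d) + sq (\sum_d (a d)^* * u1 d) <= \sum_d (a d)^* * a d.
Proof.
move=> ou; have [h0 [h1 h01]] := ou.
have h10 : \sum_e u1 e * (u0 e)^* = 0 by rewrite -conj_sum_prod h01 rmorph0.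
set al0 := \sum_d _; set al1 := \sum_d (a d)^* * u1 d.
have c0 : \sum_d a d * (u0 d)^* = al0^*.
  by rewrite /al0 rmorph_sum; apply: eq_bigr => d _; rewrite rmorphM /= conjCK.
have c1 : \sum_d a d * (u1 d)^* = al1^*.
  by rewrite /al1 rmorph_sum; apply: eq_bigr => d _; rewrite rmorphM /= conjCK.
have E : \sum_d sq (a d - al0^* * u0 d - al1^* * u1 d) =
         \sum_d (a d)^* * a d - sq al0 - sq al1.
  rewrite (eq_bigr (fun d => (a d)^* * a d - al0 * (a d * (u0 d)^*)
     - al1 * (a d * (u1 d)^*) - al0^* * ((a d)^* * u0 d) - al1^* * ((a d)^* * u1 d)
     + al0^* * al0 * (u0 d * (u0 d)^*) + al0^* * al1 * (u0 d * (u1 d)^*)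
     + al1^* * al0 * (u1 d * (u0 d)^*) + al1^* * al1 * (u1 d * (u1 d)^*))); last first.
    by move=> d _; rewrite /sq !rmorphB !rmorphM /= !conjCK; ring.
  rewrite !big_split /= !sumrN -!mulr_sumr c0 c1 h0 h1 h01 h10 -/al0 -/al1 /sq; ring.
rewrite -subr_ge0 opprD addrA -E.
by apply: sumr_ge0 => d _; exact: sq_ge0.
Qed.
Lemma leaf (C : numClosedFieldType) N D (z : 'I_N) (hz : nat_of_ord z = 0%N)
  (d0 : 'I_D) (phi F : state C N D) :
  EPR_leaf phi -> isplit z F -> ipg F F <= 1 -> 2%:R * sq (ipg F phi) <= ipg phi phi.
Proof.
move=> [j [u0 [u1 [v0 [v1 [w [c [hj [ou [ov hphi]]]]]]]]]] [a [b [hb hF]]] hF1.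
have pz : forall i : 'I_N, (nat_of_ord i == 0%N) = (i == z).
  by move=> i; rewrite -hz; apply/eqP/eqP => [/val_inj|->].
have jz : j != z by rewrite -pz.
have zj : z != j by rewrite eq_sym.
pose W (x : basis N D) := \prod_(k : 'I_N | (nat_of_ord k != 0%N) && (k != j)) w k (x k).
pose E (d e : 'I_D) := u0 d * v0 e + u1 d * v1 e.
have hphi' : forall x, phi x = c * E (x z) (x j) * W x.
  by move=> x; rewrite hphi (big_pred1 z) // => i; rewrite /= pz.
have Wz : forall x e, W (upd x z e) = W x.
  move=> x e; apply: eq_bigr => k /andP [k0 _]; rewrite upd_ne //.
  by rewrite -pz.
have Wj : forall x e, W (upd x j e) = W x.
  by move=> x e; apply: eq_bigr => k /andP [_ kj]; rewrite upd_ne.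
pose al0 := \sum_d (a d)^* * u0 d.
pose al1 := \sum_d (a d)^* * u1 d.
pose g (x : basis N D) := c * (al0 * v0 (x j) + al1 * v1 (x j)) * W x.
pose Bn := \sum_(x : basis N D | x z == d0) (b x)^* * b x.
pose n' := \sum_(x : basis N D | x j == d0) (if x z == d0 then (W x)^* * W x else 0).
pose Saa := \sum_d (a d)^* * a d.
have eA : ipg F phi = \sum_(x : basis N D | x z == d0) (b x)^* * g x.
  rewrite /ipg (splitS z d0); apply: eq_bigr => x _.
  transitivity (\sum_d (b x)^* * (c * W x) *
      ((a d)^* * u0 d * v0 (x j) + (a d)^* * u1 d * v1 (x j))).
    apply: eq_bigr => d _; rewrite hF hphi' upd_at hb (upd_ne _ _ jz) Wz.
    by rewrite rmorphM /E; ring.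
  rewrite -mulr_sumr big_split /= -!mulr_suml -/al0 -/al1 /g; ring.
have eB : ipg F F = Saa * Bn.
  rewrite /ipg (splitS z d0) mulr_sumr; apply: eq_bigr => x _.
  rewrite mulr_suml; apply: eq_bigr => d _.
  by rewrite hF upd_at hb rmorphM; ring.
have eG : \sum_(x : basis N D | x z == d0) (g x)^* * g x = sq c * (sq al0 + sq al1) * n'.
  rewrite big_mkcond (splitS j d0) /n' mulr_sumr; apply: eq_bigr => x _.
  transitivity (\sum_e (if x z == d0 then
      sq c * ((W x)^* * W x) * sq (al0 * v0 e + al1 * v1 e) else 0)).
    apply: eq_bigr => e _; rewrite (upd_ne _ _ zj); case: ifP => // _.
    by rewrite /g upd_at Wj /sq !rmorphM /=; ring.
  case: ifP => _; last by rewrite big1 ?mulr0.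
  by rewrite -mulr_sumr onb_sum //; ring.
have ephi : ipg phi phi = 2%:R * sq c * n'.
  rewrite /ipg (splitS z d0) big_mkcond (splitS j d0) /n' mulr_sumr.
  apply: eq_bigr => x _.
  transitivity (\sum_e (if x z == d0 then
      sq c * ((W x)^* * W x) * \sum_d sq (E d e) else 0)).
    apply: eq_bigr => e _; rewrite (upd_ne _ _ zj); case: ifP => // _.
    rewrite mulr_sumr; apply: eq_bigr => d _.
    rewrite hphi' upd_at (upd_ne _ _ jz) upd_at Wz Wj /sq !rmorphM /=; ring.
  case: ifP => _; last by rewrite big1 ?mulr0.
  rewrite -mulr_sumr exchange_big /=.
  have -> : \sum_d \sum_e sq (E d e) = 2%:R.
    rewrite /E; under eq_bigr do rewrite onb_sum //.
    by case: ou => [h0 [h1 _]]; rewrite big_split /= h0 h1.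
  ring.
have h1 : sq (ipg F phi) <= Bn * (sq c * (sq al0 + sq al1) * n').
  pose f (x : basis N D) := if x z == d0 then b x else 0.
  pose g' (x : basis N D) := if x z == d0 then g x else 0.
  have := CS f g'.
  have -> : ipg f g' = ipg F phi.
    rewrite eA /ipg [RHS]big_mkcond; apply: eq_bigr => x _; rewrite /f /g'.
    by case: ifP => _ //; rewrite rmorph0 mul0r.
  have -> : ipg f f = Bn.
    rewrite /Bn /ipg [RHS]big_mkcond; apply: eq_bigr => x _; rewrite /f.
    by case: ifP => _ //; rewrite rmorph0 mul0r.
  have -> : ipg g' g' = sq c * (sq al0 + sq al1) * n'.
    rewrite -eG /ipg [RHS]big_mkcond; apply: eq_bigr => x _; rewrite /g'.
    by case: ifP => _ //; rewrite rmorph0 mul0r.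
  by [].
have Bn0 : 0 <= Bn by apply: sumr_ge0 => x _; rewrite mulrC sq_ge0.
have n0 : 0 <= n' by apply: sumr_ge0 => x _; case: ifP => // _; rewrite mulrC sq_ge0.
have c0 : 0 <= sq c by exact: sq_ge0.
have h2 : Bn * (sq c * (sq al0 + sq al1) * n') <= sq c * n' * ipg F F.
  rewrite eB.
  have -> : Bn * (sq c * (sq al0 + sq al1) * n') = (Bn * sq c * n') * (sq al0 + sq al1)
    by ring.
  have -> : sq c * n' * (Saa * Bn) = (Bn * sq c * n') * Saa by ring.
  apply: ler_wpM2l; first by apply: mulr_ge0 => //; apply: mulr_ge0.
  exact: bessel.
have h3 : sq c * n' * ipg F F <= sq c * n'.
  by rewrite -[X in _ <= X]mulr1; apply: ler_wpM2l => //; apply: mulr_ge0.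
rewrite ephi -mulrA; apply: ler_wpM2l => //.
exact: le_trans h1 (le_trans h2 h3).
Qed.
Lemma nrm2_ipg (C : numClosedFieldType) N D (P : state C N D) : nrm2 P = ipg P P.
Proof. by apply: eq_bigr => x _; rewrite mulrC. Qed.

Lemma ipg_scale (C : numClosedFieldType) (I : finType) (r : C) (f g : I -> C) :
  ipg (fun x => r * f x) g = r^* * ipg f g.
Proof. rewrite /ipg mulr_sumr; apply: eq_bigr => x _; by rewrite rmorphM mulrA. Qed.

Lemma ipg_scaler (C : numClosedFieldType) (I : finType) (r : C) (f g : I -> C) :
  ipg f (fun x => r * g x) = r * ipg f g.
Proof. rewrite /ipg mulr_sumr; apply: eq_bigr => x _; ring. Qed.

Lemma invariant (C : numClosedFieldType) N D (z : 'I_N) (hz : nat_of_ord z = 0%N)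
  (d0 : 'I_D) (p : locc C N D) : valid_locc p ->
  forall (P F : state C N D), isplit z F -> ipg F F <= 1 ->
  succ_prob p P <= 2%:R * (ipg P P - sq (ipg F P)).
Proof.
elim: p => [|k m K nx IH] /= hp P F hs h1.
  have A0 : 0 <= ipg P P by exact: ipg_ge0.
  have hcs : sq (ipg F P) <= ipg P P.
    apply: le_trans (CS F P) _; rewrite -[X in _ <= X]mul1r.
    by apply: ler_wpM2r.
  rewrite /pdec; case: excluded_middle_informative => H.
    rewrite nrm2_ipg -subr_ge0.
    have -> : 2%:R * (ipg P P - sq (ipg F P)) - ipg P P =
              ipg P P - 2%:R * sq (ipg F P) by ring.
    by rewrite subr_ge0; exact: (leaf hz d0 H hs h1).
  by apply: mulr_ge0 => //; rewrite subr_ge0.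
case: hp => hK hnx.
pose Pi i := applyL k (K i) P.
pose Fi i := applyL k (K i) F.
pose n i := ipg (Fi i) (Fi i).
pose zz i := ipg (Fi i) (Pi i).
pose y i := if n i == 0 then 0 else sq (zz i) / n i.
have n0 : forall i, 0 <= n i by move=> i; exact: ipg_ge0.
have hcs : forall i, sq (zz i) <= n i * ipg (Pi i) (Pi i) by move=> i; exact: CS.
have y0 : forall i, 0 <= y i.
  move=> i; rewrite /y; case: ifP => _ //.
  by apply: divr_ge0; [exact: sq_ge0 | exact: n0].
have hzy : forall i, sq (zz i) = n i * y i.
  move=> i; rewrite /y; case: (eqVneq (n i) 0) => [e|ne].
    apply/eqP; rewrite mulr0 eq_le sq_ge0 andbT.
    by have := hcs i; rewrite e mul0r.
  by rewrite mulrC -mulrA mulVf ?mulr1.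
have key : forall i, succ_prob (nx i) (Pi i) <= 2%:R * (ipg (Pi i) (Pi i) - y i).
  move=> i; rewrite /y; case: (eqVneq (n i) 0) => [e|ne].
    apply: le_trans (IH i (hnx i) (Pi i) F hs h1) _.
    rewrite subr0; apply: ler_wpM2l => //.
    by rewrite lerBlDr lerDl sq_ge0.
  pose kap := (sqrtC (n i))^-1.
  have kc : kap^* = kap.
    by apply: geC0_conj; rewrite invr_ge0 sqrtC_ge0.
  have kk : kap * kap = (n i)^-1 by rewrite -invfM -expr2 sqrtCK.
  have := IH i (hnx i) (Pi i) (fun x => kap * Fi i x)
            (isplit_scale kap (isplit_applyL k (K i) hs)).
  rewrite !ipg_scale.
  have -> : sq (kap^* * ipg (Fi i) (Pi i)) = sq (zz i) / n i.
    by rewrite /sq rmorphM /= !kc -kk /zz; ring.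
  apply.
  rewrite ipg_scaler kc -/(n i).
  have -> : kap * (kap * n i) = (kap * kap) * n i by ring.
  by rewrite kk mulVf.
apply: le_trans (ler_sum _ (fun i _ => key i)) _.
rewrite -mulr_sumr sumrB (kraus k d0 hK P P).
apply: ler_wpM2l => //.
apply: lerB => //.
rewrite -(kraus k d0 hK F P).
apply: le_trans (wcs n0 y0 hzy) _.
rewrite -[X in _ <= X]mul1r; apply: ler_wpM2r; first exact: sumr_ge0.
by rewrite (kraus k d0 hK F F).
Qed.
Definition zb N D (o0 : 'I_D) : basis N D := [ffun _ => o0].
Definition eb N D (o0 o1 : 'I_D) (k : 'I_N) : basis N D :=
  [ffun i => if i == k then o1 else o0].

Lemma sum_ind (C : numClosedFieldType) (T : finType) (G : T -> C) (y : T) :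
  \sum_x G x * (x == y)%:R = G y.
Proof.
rewrite (bigD1 y) //= eqxx mulr1 big1 ?addr0 // => x xy.
by rewrite (negbTE xy) mulr0.
Qed.

Lemma sum_ind' (C : numClosedFieldType) (T : finType) (y : T) :
  \sum_x ((y == x)%:R : C) = 1.
Proof.
by rewrite -[RHS](sum_ind (fun _ => 1) y); apply: eq_bigr => x _; rewrite mul1r eq_sym.
Qed.

Lemma o01 D (o0 o1 : 'I_D) (h0 : nat_of_ord o0 = 0%N) (h1 : nat_of_ord o1 = 1%N) : o0 != o1.
Proof. by apply/eqP => e; move: h0 h1; rewrite e => ->. Qed.

Lemma eb_inj N D (o0 o1 : 'I_D) (h0 : nat_of_ord o0 = 0%N) (h1 : nat_of_ord o1 = 1%N) (k k' : 'I_N) : (eb o0 o1 k == eb o0 o1 k') = (k == k').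
Proof.
apply/eqP/eqP => [e|->] //.
have := congr1 (fun f : basis N D => f k) e; rewrite !ffunE eqxx.
case: eqP => // _ e2; by move: (o01 h0 h1); rewrite e2 eqxx.
Qed.

Lemma eb_zb N D (o0 o1 : 'I_D) (h0 : nat_of_ord o0 = 0%N) (h1 : nat_of_ord o1 = 1%N) (k : 'I_N) : (eb o0 o1 k == zb N o0) = false.
Proof.
apply/eqP => e; have := congr1 (fun f : basis N D => f k) e; rewrite !ffunE eqxx.
by move=> e2; move: (o01 h0 h1); rewrite e2 eqxx.
Qed.

Lemma psi_zb N D (o0 o1 : 'I_D) (h0 : nat_of_ord o0 = 0%N) (h1 : nat_of_ord o1 = 1%N) (C : numClosedFieldType) (t : C) :
  @psi_t C N D t (zb N o0) = sqrtC (1 - N%:R * t).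
Proof.
rewrite /psi_t.
have -> : [forall k, nat_of_ord (zb N o0 k) <= 1]%N.
  by apply/forallP => k; rewrite ffunE h0.
have -> : (\sum_k nat_of_ord (zb N o0 k) == 0)%N.
  by rewrite sum_nat_eq0; apply/forallP => k; rewrite ffunE h0.
by [].
Qed.

Lemma psi_eb N D (o0 o1 : 'I_D) (h0 : nat_of_ord o0 = 0%N) (h1 : nat_of_ord o1 = 1%N) (C : numClosedFieldType) (t : C) k :
  @psi_t C N D t (eb o0 o1 k) = sqrtC t.
Proof.
rewrite /psi_t.
have -> : [forall i, nat_of_ord (eb o0 o1 k i) <= 1]%N.
  by apply/forallP => i; rewrite ffunE; case: ifP => _; rewrite ?h0 ?h1.
have -> : (\sum_i nat_of_ord (eb o0 o1 k i) = 1)%N.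
  rewrite (bigD1 k) //= ffunE eqxx h1 big1 // => i ik.
  by rewrite ffunE (negbTE ik) h0.
by [].
Qed.

Lemma psi_F1 N D (o0 o1 : 'I_D) (h0 : nat_of_ord o0 = 0%N) (h1 : nat_of_ord o1 = 1%N) (C : numClosedFieldType) (t : C) (x : basis N D) :
  @psi_t C N D t x = (x == zb N o0)%:R * sqrtC (1 - N%:R * t) +
                  (\sum_k ((x == eb o0 o1 k)%:R : C)) * sqrtC t.
Proof.
case: (eqVneq x (zb N o0)) => [->|xz].
  rewrite (psi_zb N h0 h1) mul1r big1 ?mul0r ?addr0 // => k _.
  by rewrite eq_sym (eb_zb h0 h1).
case: (boolP [exists k, x == eb o0 o1 k]) => [/existsP [k /eqP ->]|nex].
  rewrite (psi_eb h0 h1) mul0r add0r.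
  under eq_bigr do rewrite (eb_inj h0 h1).
  by rewrite sum_ind' mul1r.
rewrite mul0r add0r big1 ?mul0r; last first.
  move=> k _; case: eqP => // e; case/negP: nex; apply/existsP; exists k.
  by rewrite e.
rewrite /psi_t; case: ifP => // hall.
have hall' : forall i, (nat_of_ord (x i) <= 1)%N by move=> i; exact: (forallP hall i).
case: ifP => hs0.
  case/eqP: xz; apply/ffunP => i; apply: val_inj => /=; rewrite ffunE h0 /=.
  move: hs0; rewrite sum_nat_eq0 => /forallP /(_ i) /=; by move/eqP.
case: ifP => // hs1.
case/negP: nex.
have : (\sum_k nat_of_ord (x k))%N != 0%N by rewrite hs0.
rewrite sum_nat_eq0 negb_forall => /existsP [k /= xk].
apply/existsP; exists k; apply/eqP/ffunP => i; apply: val_inj => /=; rewrite ffunE.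
have xk1 : nat_of_ord (x k) = 1%N.
  by move: (hall' k) xk; case: (nat_of_ord (x k)) => [|[|]].
case: (eqVneq i k) => [->|ik]; first by rewrite h1.
rewrite h0.
move: hs1; rewrite (bigD1 k) //= xk1 (bigD1 i) //=.
by rewrite add1n eqSS addn_eq0 => /andP [/eqP -> _].
Qed.
Lemma alg_id (C : numClosedFieldType) (s u r t n : C)
  (hs : s ^+ 2 = 1 - n * t) (hu : u ^+ 2 = t)
  (hr : r ^+ 2 = 1 - 4%:R * (n - 1) * t ^+ 2) :
  2%:R * (((r + 1 - 2%:R * t) * s + 2%:R * s * u * u) ^+ 2 +
          (n - 1) * ((r + 1 - 2%:R * t) * u) ^+ 2) =
  (1 + r) * ((r + 1 - 2%:R * t) ^+ 2 + (2%:R * s * u) ^+ 2).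
Proof.
set p := r + 1 - 2%:R * t.
have e1 : 2%:R * ((p * s + 2%:R * s * u * u) ^+ 2 + (n - 1) * (p * u) ^+ 2) =
   2%:R * (p^+2 * s^+2 + 4%:R * p * s^+2 * u^+2 + 4%:R * s^+2 * (u^+2)^+2
           + (n - 1) * p^+2 * u^+2) by ring.
have e2 : (1 + r) * (p ^+ 2 + (2%:R * s * u) ^+ 2) =
   (1 + r) * (p ^+ 2 + 4%:R * s^+2 * u^+2) by ring.
rewrite e1 e2 hs hu; apply/eqP; rewrite -subr_eq0; apply/eqP.
transitivity (p * ((1 - 2%:R * t) ^+ 2 - r ^+ 2 + 4%:R * t * (1 - n * t))).
  rewrite /p; ring.
rewrite hr; have -> : (1 - 2%:R * t) ^+ 2 - (1 - 4%:R * (n - 1) * t ^+ 2) +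
   4%:R * t * (1 - n * t) = 0 by ring.
by rewrite mulr0.
Qed.

Lemma sum_F1 (C : numClosedFieldType) N D (t : C) (o0 o1 : 'I_D)
  (h0 : nat_of_ord o0 = 0%N) (h1 : nat_of_ord o1 = 1%N) (G : basis N D -> C) :
  \sum_x G x * @psi_t C N D t x =
  G (zb N o0) * sqrtC (1 - N%:R * t) + (\sum_k G (eb o0 o1 k)) * sqrtC t.
Proof.
under eq_bigr do rewrite (psi_F1 h0 h1) mulrDr.
rewrite big_split /=; congr (_ + _).
  transitivity (\sum_x (G x * (x == zb N o0)%:R) * sqrtC (1 - N%:R * t)).
    by apply: eq_bigr => x _; ring.
  by rewrite -mulr_suml sum_ind.
transitivity (\sum_x \sum_k (G x * (x == eb o0 o1 k)%:R) * sqrtC t).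
  apply: eq_bigr => x _; rewrite mulr_suml mulr_sumr; apply: eq_bigr => k _; ring.
rewrite exchange_big mulr_suml; apply: eq_bigr => k _.
by rewrite -mulr_suml sum_ind.
Qed.

Lemma sum_B (C : numClosedFieldType) N D (o0 o1 : 'I_D) (z : 'I_N)
  (H : basis N D -> C) (b0 b1 : C) :
  \sum_x H x * ((x == zb N o0)%:R * b0 +
                (\sum_(k | k != z) (x == eb o0 o1 k)%:R) * b1) =
  H (zb N o0) * b0 + (\sum_(k | k != z) H (eb o0 o1 k)) * b1.
Proof.
under eq_bigr do rewrite mulrDr.
rewrite big_split /=; congr (_ + _).
  transitivity (\sum_x (H x * (x == zb N o0)%:R) * b0).
    by apply: eq_bigr => x _; ring.
  by rewrite -mulr_suml sum_ind.
transitivity (\sum_x \sum_(k | k != z) (H x * (x == eb o0 o1 k)%:R) * b1).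
  apply: eq_bigr => x _; rewrite mulr_suml mulr_sumr; apply: eq_bigr => k _; ring.
rewrite exchange_big mulr_suml; apply: eq_bigr => k _.
by rewrite -mulr_suml sum_ind.
Qed.

Lemma sum_const_ne (C : numClosedFieldType) N (z : 'I_N) (c : C) :
  \sum_(k | k != z) c = (N%:R - 1) * c.
Proof.
have := sumr_const [pred _ : 'I_N | true] c; rewrite card_ord.
rewrite (bigD1 z) //= => e; apply: (addrI c); rewrite e -mulr_natl; ring.
Qed.
Theorem lemma2 (C : numClosedFieldType) (N D : nat) (t : C)
  (hN : (3 <= N)%N) (hD : (2 <= D)%N)
  (ht0 : 0 <= t) (ht1 : t <= N%:R^-1)
  (p : locc C N D) (hp : valid_locc p) :
  succ_prob p (@psi_t C N D t) <= 1 - sqrtC (1 - 4%:R * (N.-1)%:R * t ^+ 2).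
Proof.
have N0 : (0 < N)%N by apply: leq_trans hN.
have D0 : (0 < D)%N by apply: leq_trans hD.
pose z : 'I_N := Ordinal N0.
pose o0 : 'I_D := Ordinal D0.
pose o1 : 'I_D := Ordinal hD.
have hz : nat_of_ord z = 0%N by [].
have h0 : nat_of_ord o0 = 0%N by [].
have h1 : nat_of_ord o1 = 1%N by [].
have oo : o0 != o1 by exact: o01 h0 h1.
have eN1 : (N.-1)%:R = N%:R - 1 :> C by rewrite -subn1 natrB.
set r := sqrtC _.
pose s := sqrtC (1 - N%:R * t).
pose u := sqrtC t.
have Npos : 0 < N%:R :> C by rewrite ltr0n.
have hNt : N%:R * t <= 1.
  by have := ler_wpM2l (ltW Npos) ht1; rewrite mulfV // lt0r_neq0.
have hs2 : s ^+ 2 = 1 - N%:R * t by exact: sqrtCK.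
have hu2 : u ^+ 2 = t by exact: sqrtCK.
have s0 : 0 <= s by rewrite sqrtC_ge0 subr_ge0.
have u0 : 0 <= u by rewrite sqrtC_ge0.
have hr2 : r ^+ 2 = 1 - 4%:R * (N%:R - 1) * t ^+ 2 by rewrite sqrtCK eN1.
have r0 : 0 <= r.
  rewrite sqrtC_ge0 subr_ge0.
  have hn : (4 * N.-1 <= N * N)%N by nia.
  apply: le_trans (_ : (N%:R * t) ^+ 2 <= 1); last first.
    by apply: exprn_ile1 => //; apply: mulr_ge0 => //; exact: ltW.
  rewrite exprMn; apply: ler_wpM2r; first exact: exprn_ge0.
  by rewrite -natrM -natrX ler_nat expnS expn1.
have p0 : 0 < r + 1 - 2%:R * t.
  have h3 : 3%:R * t <= 1.
    apply: le_trans hNt; apply: ler_wpM2r => //; by rewrite ler_nat.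
  have : 0 < 3%:R * (1 - 2%:R * t) :> C.
    have -> : 3%:R * (1 - 2%:R * t) = 2%:R * (1 - 3%:R * t) + 1 :> C by ring.
    apply: ltr_pwDr => //; apply: mulr_ge0 => //; by rewrite subr_ge0.
  rewrite pmulr_rgt0 ?ltr0n // => h.
  by rewrite -addrA; apply: ltr_wpDl.
set pp := r + 1 - 2%:R * t.
pose q := 2%:R * s * u.
pose b0 := pp * s + q * u.
pose b1 := pp * u.
pose S := b0 ^+ 2 + (N%:R - 1) * b1 ^+ 2.
pose M := pp ^+ 2 + q ^+ 2.
have hid : 2%:R * S = (1 + r) * M by apply: alg_id.
have q0 : 0 <= q by apply: mulr_ge0 => //; apply: mulr_ge0.
have b00 : 0 <= b0 by apply: addr_ge0; apply: mulr_ge0 => //; exact: ltW.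
have b10 : 0 <= b1 by apply: mulr_ge0 => //; exact: ltW.
have M0 : 0 < M by apply: ltr_wpDr; [exact: exprn_ge0 | exact: exprn_gt0].
have S0 : 0 < S.
  have : 0 < 2%:R * S :> C.
    by rewrite hid; apply: mulr_gt0 => //; apply: ltr_wpDr => //.
  by rewrite pmulr_rgt0 ?ltr0n.
pose a (d : 'I_D) := (d == o0)%:R * pp + (d == o1)%:R * q.
pose B (y : basis N D) := (y == zb N o0)%:R * b0 +
   (\sum_(k | k != z) (y == eb o0 o1 k)%:R) * b1.
pose F0 (x : basis N D) := a (x z) * B (upd x z o0).
have a0 : forall d, 0 <= a d.
  by move=> d; apply: addr_ge0; apply: mulr_ge0 => //; exact: ltW.
have B0 : forall y, 0 <= B y.
  move=> y; apply: addr_ge0; apply: mulr_ge0 => //.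
  by apply: sumr_ge0 => k _.
have F0c : forall x, (F0 x)^* = F0 x.
  by move=> x; apply: geC0_conj; apply: mulr_ge0.
have psic : forall x, (@psi_t C N D t x)^* = @psi_t C N D t x.
  move=> x; apply: geC0_conj; rewrite (psi_F1 h0 h1).
  by apply: addr_ge0; apply: mulr_ge0 => //; apply: sumr_ge0.
have a_o0 : a o0 = pp by rewrite /a eqxx (negbTE oo) mul1r mul0r addr0.
have a_o1 : a o1 = q by rewrite /a eqxx eq_sym (negbTE oo) mul1r mul0r add0r.
have ezb : upd (zb N o0) z o0 = zb N o0.
  by apply/ffunP => i; rewrite updE ffunE; case: ifP.
have ebz : upd (eb o0 o1 z) z o0 = zb N o0.
  by apply/ffunP => i; rewrite updE !ffunE; case: (i == z).
have ebk : forall k, k != z -> upd (eb o0 o1 k) z o0 = eb o0 o1 k.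
  move=> k kz; apply/ffunP => i; rewrite updE !ffunE; case: (eqVneq i z) => // ->.
  by rewrite eq_sym (negbTE kz).
have Bzb : B (zb N o0) = b0.
  rewrite /B eqxx mul1r big1 ?mul0r ?addr0 // => k _.
  by rewrite eq_sym (eb_zb h0 h1).
have Beb : forall k, k != z -> B (eb o0 o1 k) = b1.
  move=> k kz; rewrite /B (eb_zb h0 h1) mul0r add0r.
  rewrite (bigD1 k) //= eqxx big1 ?addr0 ?mul1r // => k' /andP [_ kk'].
  by rewrite (eb_inj h0 h1) eq_sym (negbTE kk').
have ebkz : forall k, k != z -> eb o0 o1 k z = o0.
  by move=> k kz; rewrite ffunE eq_sym (negbTE kz).
have eIP : ipg F0 (@psi_t C N D t) = S.
  rewrite /ipg; under eq_bigr do rewrite F0c.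
  rewrite (sum_F1 _ h0 h1) (bigD1 z) //=.
  rewrite (eq_bigr (fun _ => pp * b1)); last first.
    by move=> k kz; rewrite /F0 ebk // ebkz // a_o0 Beb.
  rewrite sum_const_ne /F0 ezb ebz !ffunE eqxx a_o0 a_o1 Bzb.
  rewrite /S /b0 /b1 -/s -/u; ring.
have eNF : ipg F0 F0 = M * S.
  rewrite /ipg (splitS z o0).
  have sa : \sum_d a d * a d = M.
    rewrite (bigD1 o0) //= (bigD1 o1) //=.
    rewrite big1 ?addr0; last first.
      move=> d /andP [d0 d1]; by rewrite /a (negbTE d0) (negbTE d1) !mul0r addr0 mul0r.
    by rewrite a_o0 a_o1 /M !expr2.
  transitivity (\sum_(x : basis N D | x z == o0) M * (B x * B x)).
    apply: eq_bigr => x /eqP xz.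
    have ex : upd x z o0 = x by rewrite -xz upd_id.
    rewrite (eq_bigr (fun d => a d * a d * (B x * B x))); last first.
      by move=> d _; rewrite F0c /F0 upd_at upd_upd ex; ring.
    by rewrite -mulr_suml sa.
  rewrite -mulr_sumr; congr (M * _).
  pose H (x : basis N D) := if x z == o0 then B x else 0.
  transitivity (\sum_x H x * B x).
    rewrite big_mkcond /=; apply: eq_bigr => x _; rewrite /H.
    by case: ifP => _; rewrite ?mul0r.
  rewrite (sum_B o0 o1 z H b0 b1).
  rewrite (eq_bigr (fun _ => b1)); last first.
    by move=> k kz; rewrite /H ebkz // eqxx Beb.
  rewrite sum_const_ne /H !ffunE eqxx Bzb /S; ring.
pose kap := (sqrtC (M * S))^-1.
have MS0 : 0 < M * S by apply: mulr_gt0.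
have kc : kap^* = kap.
  by apply: geC0_conj; rewrite invr_ge0 sqrtC_ge0; exact: ltW.
have kk : kap * kap = (M * S)^-1 by rewrite -invfM -expr2 sqrtCK.
pose Phi := fun x => kap * F0 x.
have hsplit : isplit z Phi.
  apply: isplit_scale; exists a, (fun x => B (upd x z o0)); split => //.
  by move=> x c; rewrite upd_upd.
have hPhi1 : ipg Phi Phi <= 1.
  rewrite /Phi ipg_scale ipg_scaler eNF kc mulrA kk mulVf //.
  exact: lt0r_neq0.
have hpsi1 : ipg (@psi_t C N D t) (@psi_t C N D t) = 1.
  rewrite /ipg; under eq_bigr do rewrite psic.
  rewrite (sum_F1 _ h0 h1) (psi_zb N h0 h1).
  under eq_bigr do rewrite (psi_eb h0 h1).
  rewrite sumr_const card_ord -[sqrtC t *+ N]mulr_natl -/s -/u.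
  have -> : s * s + N%:R * u * u = s ^+ 2 + N%:R * u ^+ 2 by ring.
  rewrite hs2 hu2; ring.
have := invariant hz o0 hp (@psi_t C N D t) hsplit hPhi1.
rewrite hpsi1 /Phi ipg_scale eIP kc.
have Mn : M != 0 by exact: lt0r_neq0.
have Sn : S != 0 by exact: lt0r_neq0.
have -> : sq (kap * S) = S / M.
  rewrite /sq rmorphM /= kc (geC0_conj (ltW S0)).
  have -> : kap * S * (kap * S) = kap * kap * (S * S) by ring.
  by rewrite kk invfM; field; rewrite Mn Sn.
have eS : S = (1 + r) * M / 2%:R.
  by rewrite -hid mulrC mulKf // pnatr_eq0.
move=> H; apply: le_trans H _; rewrite eS.
rewrite le_eqVlt; apply/orP; left; apply/eqP.
by field; rewrite ?Mn ?Sn ?pnatr_eq0.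
Qed.
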